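(* Let $N=((V\cup \{s\}, A),\tau)$ be an acyclic temporal network (no arc enters $s$) and let $k\in \mathbb{N}$ be such that $$\min\{k,|\rho_N^i(v)|\}\ge \min\{k,|\delta_N^i(v)|\} \quad \text{for all } i\in \mathbb{N} \text{ and all } v\in V.$$ Then there exist $k$ pairwise arc-disjoint $\tau$-respecting $s$-arborescences $T_1,\dots,T_k$ in $D=(V\cup\{s\},A)$ such that each vertex $v\in V$ belongs to exactly $\min\{k,d^-_A(v)\}$ of them.
   Context: A temporal network is a pair $N=(D,\tau)$ where $D=(V\cup\{s\},A)$ is a directed graph (parallel arcs allowed) with a root $s$ that no arc enters, and $\tau:A\to\mathbb{N}$. $N$ is acyclic if $D$ has no directed cycle. $d^-_A(v)$ is the number of arcs entering $v$. For $i\in\mathbb{N}$, $\rho_N^i(v)=\{a \text{ entering } v:\tau(a)\le i\}$ and $\delta_N^i(v)=\{a\text{ leaving } v:\tau(a)\le i\}$. An $s$-arborescence is an acyclic subgraph $F=(V'\cup\{s\},A')$ with $V'\subseteq V$ in which every vertex of $V'$ has in-degree exactly $1$ (it need not span $V$). A directed path with arcs $a_1,\dots,a_\ell$ in order is $\tau$-respecting if $\tau(a_1)\le\tau(a_2)\le\dots\le\tau(a_\ell)$; an $s$-arborescence is $\tau$-respecting if for each of its vertices $v$ the unique $(s,v)$-path in it is $\tau$-respecting. *)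

(* Defs.v *)
From mathcomp Require Import all_boot.
Set Implicit Arguments. Unset Strict Implicit. Unset Printing Implicit Defensive.

(* A directed multigraph on a finite vertex type W with a finite arc type Ar;
   each arc a goes from tl a to hd a.  Parallel arcs are allowed. *)
Section Digraph.
Variables (W Ar : finType) (tl hd : Ar -> W).

Fixpoint walk (x : W) (p : seq Ar) (y : W) : bool :=
  match p with
  | [::] => x == y
  | a :: p' => (tl a == x) && walk (hd a) p' y
  end.

Definition dpath (x : W) (p : seq Ar) (y : W) : bool :=
  walk x p y && uniq (x :: map hd p).

Definition has_cycle (B : {set Ar}) : Prop :=
  exists (x : W) (p : seq Ar), [/\ p != [::], all (mem B) p & walk x p x].

Definition acyclic (B : {set Ar}) : Prop := ~ has_cycle B.

Definition indeg (v : W) : nat := #|[set a | hd a == v]|.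
Definition rho (tau : Ar -> nat) (i : nat) (v : W) : {set Ar} :=
  [set a | (hd a == v) && (tau a <= i)].
Definition delta (tau : Ar -> nat) (i : nat) (v : W) : {set Ar} :=
  [set a | (tl a == v) && (tau a <= i)].

Definition s_arborescence (s : W) (Vs : {set W}) (B : {set Ar}) : Prop :=
  [/\ s \notin Vs,
      (forall a, a \in B -> (tl a \in s |: Vs) /\ (hd a \in s |: Vs)),
      acyclic B &
      (forall v, v \in Vs -> #|[set a in B | hd a == v]| = 1)].

Definition tau_respecting (tau : Ar -> nat) (p : seq Ar) : bool :=
  sorted leq (map tau p).

Definition tau_resp_arborescence (tau : Ar -> nat) (s : W)
    (Vs : {set W}) (B : {set Ar}) : Prop :=
  s_arborescence s Vs B /\
  forall v p, v \in s |: Vs -> all (mem B) p -> dpath s p v -> tau_respecting tau p.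

End Digraph.

(* Main.v *)
Require Import Defs.
From mathcomp Require Import all_boot zify.
From Stdlib Require Import ClassicalEpsilon.
Set Implicit Arguments. Unset Strict Implicit. Unset Printing Implicit Defensive.

Section Walks.
Variables (W Ar : finType) (tl hd : Ar -> W).

Lemma walk_cat x p q y :
  walk tl hd x (p ++ q) y =
  walk tl hd x p (last x (map hd p)) && walk tl hd (last x (map hd p)) q y.
Proof.
elim: p x => [|a p IH] x /=; first by rewrite eqxx.
by rewrite IH andbA.
Qed.

Lemma walk_end x p y : walk tl hd x p y -> y = last x (map hd p).
Proof.
elim: p x => [|a p IH] x /=; first by move/eqP.
by case/andP => _ /IH.
Qed.

Lemma acyclic_walk_uniq x p y :
  acyclic tl hd [set: Ar] -> walk tl hd x p y -> uniq p.
Proof.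
move=> ac; elim: p x => [|a p IH] x //= /andP [/eqP ta w].
rewrite (IH _ w) andbT; apply/negP => ap.
case/splitPr: ap w => p1 p2.
rewrite walk_cat /= => /andP [w1 /andP [/eqP e _]].
apply: ac; exists (tl a), (a :: p1); split => //.
  by apply/allP => b _; rewrite /= inE.
by rewrite /= eqxx e.
Qed.

Lemma walk_sorted (tau : Ar -> nat) (B : {set Ar}) x p y :
  (forall a b, a \in B -> b \in B -> hd a = tl b -> tau a <= tau b) ->
  all (mem B) p -> walk tl hd x p y -> sorted leq (map tau p).
Proof.
move=> loc; elim: p x => [|a p IH] x //.
case: p IH => [|b p] IH //= /andP [aB /andP [bB allp]]
  /andP [_ /andP [/eqP tb w]].
have -> : tau a <= tau b by apply: loc => //; rewrite tb.
apply: (IH (hd a)); first by rewrite /= bB allp.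
by rewrite /= tb eqxx.
Qed.

End Walks.

Section Matching.
Variables (T X Y : finType) (w : X -> nat) (t : Y -> nat) (O : T -> {set X}).

Definition mcond (D : {set T}) (S : {set Y}) :=
  forall i, #|[set j in D | [exists x in O j, w x <= i]]| <= #|[set y in S | t y <= i]|.

Definition mgood (D : {set T}) (S : {set Y}) (g : T -> option Y) :=
  [/\ forall j, j \notin D -> g j = None,
      forall j y, g j = Some y -> y \in S,
      forall j1 j2 y, g j1 = Some y -> g j2 = Some y -> j1 = j2,
      forall j x, j \in D -> x \in O j -> exists2 y, g j = Some y & t y <= w x &
      #|[set j | g j != None]| = minn #|D| #|S| ].

Lemma match_triv D S : mcond D S -> (S == set0) || (D == set0) ->
  exists g, mgood D S g.
Proof.
move=> hc h0; exists (fun _ => None); split => //.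
- move=> j x jD xO; exfalso.
  case/orP: h0 => /eqP e; last by rewrite e inE in jD.
  have := hc (w x); rewrite e.
  have -> : [set y in (set0 : {set Y}) | t y <= w x] = set0.
    by apply/setP => y; rewrite !inE.
  rewrite cards0 leqn0 cards_eq0 => /eqP e2.
  have : j \in [set j in D | [exists x0 in O j, w x0 <= w x]].
    by rewrite inE jD; apply/existsP; exists x; rewrite xO leqnn.
  by rewrite e2 inE.
- have -> : [set j : T | @None Y != None] = set0 by apply/setP => j; rewrite !inE.
  by rewrite cards0; case/orP: h0 => /eqP ->; rewrite cards0 ?minn0 ?min0n.
Qed.

Lemma pick_j0 D : D != set0 -> exists2 j0, j0 \in D &
  forall j x, j \in D -> x \in O j -> exists2 x0, x0 \in O j0 & w x0 <= w x.
Proof.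
move=> Dn.
case: (pickP [pred p : T * X | (p.1 \in D) && (p.2 \in O p.1)]) => [p0 Hp0 | none].
  case: (arg_minnP (fun p : T * X => w p.2) Hp0) => p /andP [pD pO] pmin.
  exists p.1 => // j x jD xO; exists p.2 => //.
  by apply: (pmin (j, x)); rewrite /= jD xO.
case/set0Pn: Dn => j0 j0D; exists j0 => // j x jD xO.
by have := none (j, x); rewrite /= jD xO.
Qed.

Lemma matching n : forall (D : {set T}) (S : {set Y}), #|S| <= n -> mcond D S -> exists g, mgood D S g.
Proof.
elim: n => [|n IH] D S hS hc.
  by apply: match_triv => //; rewrite -cards_eq0 -leqn0 hS.
case: (boolP ((S == set0) || (D == set0))) => [h0|]; first exact: match_triv.
rewrite negb_or => /andP [Sn Dn].
have [j0 j0D Hj0] := pick_j0 Dn.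
have [y0 y0S] := set0Pn _ Sn.
case: (arg_minnP t y0S) => a0 a0S0 a0min.
have a0S : a0 \in S := a0S0.
have key : forall x0, x0 \in O j0 -> t a0 <= w x0.
  move=> x0 x0O; have := hc (w x0).
  have : j0 \in [set j in D | [exists x in O j, w x <= w x0]].
    by rewrite inE j0D; apply/existsP; exists x0; rewrite x0O leqnn.
  move=> jin; rewrite (cardsD1 j0) jin.
  case: (set_0Vmem [set y in S | t y <= w x0]) => [-> | [y]]; first by rewrite cards0.
  by rewrite inE => /andP [yS ty] _; apply: leq_trans (a0min y yS) ty.
have hS' : #|S :\ a0| <= n.
  by move: hS; rewrite (cardsD1 a0) a0S add1n ltnS.
have hc' : mcond (D :\ j0) (S :\ a0).
  move=> i.
  case: (set_0Vmem [set j in D :\ j0 | [exists x in O j, w x <= i]]) =>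
     [-> | [j]]; first by rewrite cards0.
  rewrite !inE => /andP [/andP [_ jD] /existsP [x /andP [xO xi]]].
  have [x0 x0O x0x] := Hj0 j x jD xO.
  have e1 : [set j in D :\ j0 | [exists x in O j, w x <= i]] =
            [set j in D | [exists x in O j, w x <= i]] :\ j0.
    by apply/setP => j'; rewrite !inE andbA.
  have e2 : [set y in S :\ a0 | t y <= i] = [set y in S | t y <= i] :\ a0.
    by apply/setP => y'; rewrite !inE andbA.
  have := hc i; rewrite e1 e2 (cardsD1 j0 [set j in D | _]) (cardsD1 a0 [set y in S | _]).
  have -> : j0 \in [set j in D | [exists x in O j, w x <= i]].
    by rewrite inE j0D; apply/existsP; exists x0; rewrite x0O (leq_trans x0x).
  have -> : a0 \in [set y in S | t y <= i].
    by rewrite inE a0S (leq_trans (key _ x0O)) // (leq_trans x0x).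
  by rewrite !add1n ltnS.
have [g' [g1 g2 g3 g4 g5]] := IH _ _ hS' hc'.
exists (fun j => if j == j0 then Some a0 else g' j); split.
- move=> j jD; have -> : (j == j0) = false by apply/eqP => e; rewrite e j0D in jD.
  by apply: g1; rewrite inE negb_and jD orbT.
- move=> j y; case: eqP => _; first by case=> <-.
  by move/g2; rewrite inE => /andP [].
- move=> j1 j2 y; case: eqP => [-> | n1]; case: eqP => [-> | n2] //.
  + case=> <- /g2; rewrite !inE eqxx /=; done.
  + move=> /g2 + [e]; rewrite -e !inE eqxx /=; done.
  + exact: g3.
- move=> j x jD xO; case: eqP => [e | ne].
    by exists a0 => //; apply: key; rewrite -e.
  apply: g4 => //; rewrite !inE jD andbT; exact/eqP.
- have -> : [set j | (if j == j0 then Some a0 else g' j) != None] =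
            j0 |: [set j | g' j != None].
    by apply/setP => j; rewrite !inE; case: (j == j0).
  rewrite cardsU1 g5 inE g1 ?inE ?eqxx //.
  by rewrite (cardsD1 j0 D) (cardsD1 a0 S) j0D a0S !add1n minnSS.
Qed.

End Matching.

Lemma disjI (T : finType) (A B : {set T}) :
  (forall x, x \in A -> x \in B -> False) -> [disjoint A & B].
Proof.
move=> H; rewrite disjoints_subset; apply/subsetP => x xA; rewrite inE.
by apply/negP => xB; apply: (H x).
Qed.

Section Main.
Variables (W Ar : finType) (hd : Ar -> W) (tau : Ar -> nat) (s : W) (k : nat).
Hypothesis no_enter_s : forall a, hd a != s.

Definition condk (tl : Ar -> W) := forall i v, v != s ->
  minn k #|rho hd tau i v| >= minn k #|delta tl tau i v|.

Definition goodtree (tl : Ar -> W) (Vs : {set W}) (B : {set Ar}) :=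
  [/\ s \notin Vs,
      (forall a, a \in B -> (tl a \in s |: Vs) /\ (hd a \in s |: Vs)),
      (forall v, v \in Vs -> #|[set a in B | hd a == v]| = 1) &
      (forall a b, a \in B -> b \in B -> hd a = tl b -> tau a <= tau b)].

Definition goodfam tl (Vs : 'I_k -> {set W}) (B : 'I_k -> {set Ar}) :=
  [/\ (forall j, goodtree tl (Vs j) (B j)),
      (forall j1 j2, j1 != j2 -> [disjoint B j1 & B j2]) &
      (forall v, v != s -> #|[set j | v \in Vs j]| = minn k (indeg hd v))].

Lemma cardT_ord : #|[set: 'I_k]| = k.
Proof. by rewrite cardsT card_ord. Qed.

Lemma base_case tl : (forall a, tl a = s) -> exists Vs B, goodfam tl Vs B.
Proof.
move=> tls.
have H v : exists g, mgood tau tau (fun _ : 'I_k => (set0 : {set Ar}))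
                        setT [set a | hd a == v] g.
  apply: (@matching _ _ _ _ _ _ #|Ar|); first exact: max_card.
  move=> i; rewrite (_ : [set j in setT | _] = set0) ?cards0 //.
  by apply/setP => j; rewrite !inE; apply/existsP => [[x]]; rewrite inE.
pose G v := proj1_sig (constructive_indefinite_description _ (H v)).
have HG v : mgood tau tau (fun _ : 'I_k => (set0 : {set Ar})) setT [set a | hd a == v] (G v)
  := proj2_sig (constructive_indefinite_description _ (H v)).
exists (fun j => [set v | (v != s) && (G v j != None)]),
       (fun j => [set a | G (hd a) j == Some a]).
split.
- move=> j; split.
  + by rewrite inE eqxx.
  + move=> a; rewrite inE => /eqP e; rewrite !inE tls eqxx; split => //.
    by rewrite (negbTE (no_enter_s a)) /= e.
  + move=> v; rewrite inE => /andP [vs].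
    case e: (G v j) => [a|] // _.
    have [_ h2 _ _ _] := HG v.
    have := h2 _ _ e; rewrite inE => /eqP ha.
    rewrite (_ : [set b in [set a0 | G (hd a0) j == Some a0] | hd b == v] = [set a])
      ?cards1 //; apply/setP => b; rewrite !inE.
    apply/idP/idP.
      by case/andP => /eqP + /eqP hb; rewrite hb e => -[->].
    by move/eqP => ->; rewrite ha e !eqxx.
  + by move=> a b _ _; rewrite tls => e; move: (no_enter_s a); rewrite e eqxx.
- move=> j1 j2 ne; apply: disjI => a; rewrite !inE => /eqP e1 /eqP e2.
  have [_ _ h3 _ _] := HG (hd a).
  by move: ne; rewrite (h3 _ _ _ e1 e2) eqxx.
- move=> v vs; have [_ _ _ _ h5] := HG v.
  move: h5; rewrite cardT_ord => <-.
  by congr #|pred_of_set _|; apply/setP => j; rewrite !inE vs.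
Qed.

End Main.

Section Step.
Variables (W Ar : finType) (hd : Ar -> W) (tau : Ar -> nat) (s : W) (k : nat).
Hypothesis no_enter_s : forall a, hd a != s.
Variables (tl : Ar -> W) (u : W) (a0 : Ar).
Hypotheses (us : u != s) (ta0 : tl a0 = u) (inu : forall a, hd a = u -> tl a = s)
  (cd : condk hd tau s k tl).
Let tl' := fun a => if tl a == u then s else tl a.

Lemma step Vs' B' : @goodfam W Ar hd tau s k tl' Vs' B' -> exists Vs B, @goodfam W Ar hd tau s k tl Vs B.
Proof.
case=> gt dj ct.
pose O := fun j => [set a in B' j | tl a == u].
pose S := [set a | hd a == u].
have mc : mcond tau tau O setT S.
  move=> i; set A := [set j in setT | _].
  have h1 : #|A| <= k by have := max_card (pred_of_set A); rewrite card_ord.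
  pose f := fun j => odflt a0 [pick x in O j | tau x <= i].
  have h2 : #|A| <= #|delta tl tau i u|.
    have inj : {in A &, injective f}.
      move=> j1 j2; rewrite !inE /f => /existsP [x1 /andP [x1O x1i]]
        /existsP [x2 /andP [x2O x2i]].
      case: pickP => [y1 /andP [y1O _] | /(_ x1)]; last by rewrite x1O x1i.
      case: pickP => [y2 /andP [y2O _] | /(_ x2)]; last by rewrite x2O x2i.
      move=> /= e; apply/eqP; apply/negPn/negP => ne.
      have := dj _ _ ne; move: y1O y2O; rewrite !inE -e => /andP [h _] /andP [h' _].
      by move/disjointFr => /(_ _ h); rewrite h'.
    rewrite -(card_in_imset inj); apply: subset_leq_card; apply/subsetP => y.
    case/imsetP => j; rewrite !inE /f => /existsP [x /andP [xO xi]] ->.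
    case: pickP => [z /andP [zO zi] | /(_ x)]; last by rewrite xO xi.
    by move: zO; rewrite !inE /= => /andP [_ ->].
  have := cd i us; rewrite leq_min => /andP [_ h3].
  apply: leq_trans (leq_trans _ h3) _; first by rewrite leq_min h1 h2.
  rewrite (_ : rho hd tau i u = [set y in S | tau y <= i]) ?geq_minr //.
  by apply/setP => y; rewrite !inE.
have [g [g1 g2 g3 g4 g5]] := @matching _ _ _ tau tau O #|Ar| setT S (max_card _) mc.
have gS j y : g j = Some y -> hd y = u /\ tl y = s.
  by move/g2; rewrite inE => /eqP h; split => //; apply: inu.
have tl'E a : tl a != u -> tl' a = tl a by rewrite /tl' => /negbTE ->.
exists (fun j => [set v | ((v \in Vs' j) && (v != u)) || ((v == u) && (g j != None))]),
       (fun j => [set a | ((a \in B' j) && (hd a != u)) || (g j == Some a)]).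
split.
- move=> j; have [t1 t2 t3 t4] := gt j; split.
  + by rewrite !inE (negbTE t1) /= eq_sym (negbTE us).
  + move=> a; rewrite !inE => /orP [/andP [aB hu] | /eqP ga].
      have [tt ht] := t2 a aB.
      split; last first.
        by move: ht; rewrite !inE hu andbT => /orP [-> | ->]; rewrite ?orbT.
      case: (boolP (tl a == u)) => tu.
        have aO : a \in O j by rewrite inE aB tu.
        have [y gy _] := g4 j a (in_setT j) aO.
        by rewrite gy !orbT.
      by move: tt; rewrite (tl'E _ tu) !inE /= andbT => /orP [-> | ->]; rewrite ?orbT.
    have [hy ty] := gS _ _ ga.
    by split; rewrite ?ty ?hy ?eqxx ?ga /= ?orbT.
  + move=> v; rewrite !inE => /orP [/andP [vV vu] | /andP [/eqP vu gn]].
      rewrite -(t3 v vV); congr #|pred_of_set _|; apply/setP => a; rewrite !inE.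
      case: (boolP (hd a == v)) => [/eqP hv | ]; rewrite ?andbF //.
      rewrite !andbT hv vu andbT; case e: (g j == Some a); last by rewrite orbF.
      by have [hh _] := gS _ _ (eqP e); move: vu; rewrite -hv hh eqxx.
    case e: (g j) gn => [y|] // _.
    rewrite (_ : [set a in _ | hd a == v] = [set y]) ?cards1 //.
    apply/setP => a; rewrite !inE vu; case: (boolP (hd a == u)) => hu.
      by rewrite andbF /= andbT; apply/eqP/eqP => [[]|->].
    by rewrite andbF; apply/esym/eqP => ay; move: hu; rewrite ay; have [-> _] := gS _ _ e; rewrite eqxx.
  + move=> a b; rewrite !inE => /orP [/andP [aB ha] | /eqP ga] /orP [/andP [bB hb] | /eqP gb] e.
    * apply: t4 => //; rewrite tl'E // -e //.
    * by have [_ tb] := gS _ _ gb; move: (no_enter_s a); rewrite e tb eqxx.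
    * have [ha' _] := gS _ _ ga.
      have bO : b \in O j by rewrite inE bB -e ha' eqxx.
      have [y gy ty] := g4 j b (in_setT j) bO.
      by move: gy; rewrite ga => -[->].
    * by have [_ tb] := gS _ _ gb; move: (no_enter_s a); rewrite e tb eqxx.
- move=> j1 j2 ne; apply: disjI => a; rewrite !inE =>
    /orP [/andP [aB1 ha1] | /eqP ga1] /orP [/andP [aB2 ha2] | /eqP ga2].
  + by move: (disjointFr (dj _ _ ne) aB1); rewrite aB2.
  + by have [h _] := gS _ _ ga2; rewrite h eqxx in ha1.
  + by have [h _] := gS _ _ ga1; rewrite h eqxx in ha2.
  + by move: ne; rewrite (g3 _ _ _ ga1 ga2) eqxx.
- move=> v vs; case: (boolP (v == u)) => [/eqP -> | vu].
    move: g5; rewrite cardsT card_ord => <-.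
    by congr #|pred_of_set _|; apply/setP => j; rewrite !inE eqxx andbF.
  rewrite -(ct v vs); congr #|pred_of_set _|; apply/setP => j.
  by rewrite !inE vu andbT (negbTE vu) /= orbF.
Qed.
End Step.

Section Rest.
Variables (W Ar : finType) (hd : Ar -> W) (tau : Ar -> nat) (s : W) (k : nat).
Hypothesis no_enter_s : forall a, hd a != s.

Lemma uniq_size_le (q : seq Ar) : uniq q -> size q <= #|Ar|.
Proof. by move=> hu; rewrite -(card_uniqP hu) max_card. Qed.

Lemma exists_u tl : acyclic tl hd [set: Ar] -> (exists a, tl a != s) ->
  exists u a0, [/\ u != s, tl a0 = u & forall a, hd a = u -> tl a = s].
Proof.
move=> ac [a1 ha1].
suff H : forall n p a y, walk tl hd (tl a) (a :: p) y ->
    all (fun b => tl b != s) (a :: p) -> #|Ar| - size (a :: p) <= n ->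
    exists u a0, [/\ u != s, tl a0 = u & forall a, hd a = u -> tl a = s].
  apply: (H #|Ar| [::] a1 (hd a1)); rewrite /= ?eqxx ?ha1 //; lia.
elim=> [|n IH] p a y w al hn;
  case: (pickP [pred b | (hd b == tl a) && (tl b != s)]) => [b /andP [/eqP hb tb] | none].
- have w' : walk tl hd (tl b) (b :: a :: p) y by rewrite /= eqxx hb.
  have := uniq_size_le (acyclic_walk_uniq ac w'); move: hn => /=; lia.
- exists (tl a), a; split => //; first by case/andP: al.
  move=> b hb; have := none b; rewrite /= hb eqxx /= => /negbFE /eqP //.
- have w' : walk tl hd (tl b) (b :: a :: p) y by rewrite /= eqxx hb.
  apply: (IH (a :: p) b y w'); first by rewrite /= tb.
  move: hn => /=; lia.
- exists (tl a), a; split => //; first by case/andP: al.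
  move=> b hb; have := none b; rewrite /= hb eqxx /= => /negbFE /eqP //.
Qed.

Section Redirect.
Variables (tl : Ar -> W) (u : W) (a0 : Ar).
Hypotheses (us : u != s) (ta0 : tl a0 = u).
Let tl' := fun a => if tl a == u then s else tl a.

Lemma tl'E a : tl' a != s -> tl' a = tl a.
Proof. by rewrite /tl'; case: (tl a == u); rewrite ?eqxx. Qed.

Lemma acyc' : acyclic tl hd [set: Ar] -> acyclic tl' hd [set: Ar].
Proof.
move=> ac [x [p [pn allp w]]]; apply: ac; exists x, p; split => //.
have xs : x != s.
  case: p pn allp w => [|a p] // _ _ w.
  have := walk_end w; have := mem_last (hd a) (map hd p) => /= + e.
  rewrite -e -map_cons => /mapP [b _ ->]; exact: no_enter_s.
have gen : forall q z y, z != s -> walk tl' hd z q y -> walk tl hd z q y.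
  elim=> [|a q IH] z y zs //= /andP [/eqP e ww].
  move: e; rewrite /tl'; case: (tl a == u) => e; first by rewrite -e eqxx in zs.
  by rewrite e eqxx /=; exact: IH _ _ (no_enter_s a) ww.
exact: gen.
Qed.
Lemma dummy_x : True. Proof.
done. Qed.

Lemma cond' : condk hd tau s k tl -> condk hd tau s k tl'.
Proof.
move=> cd i v vs; apply: leq_trans (cd i v vs).
have : #|delta tl' tau i v| <= #|delta tl tau i v|.
  apply: subset_leq_card; apply/subsetP => a; rewrite !inE => /andP [/eqP e ->].
  by rewrite -tl'E e ?eqxx.
by move=> h; rewrite leq_min geq_minl (leq_trans (geq_minr _ _) h).
Qed.

Lemma measure' : #|[set a | tl' a != s]| < #|[set a | tl a != s]|.
Proof.
rewrite (cardsD1 a0 [set a | tl a != s]) inE ta0 us add1n ltnS.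
apply: subset_leq_card; apply/subsetP => a; rewrite !inE => h.
rewrite -tl'E // h andbT; apply/eqP => e; move: h; rewrite e /tl' ta0 eqxx eqxx.
done.
Qed.

End Redirect.

End Rest.
Lemma aux (W Ar : finType) (hd : Ar -> W) (tau : Ar -> nat) (s : W) (k : nat)
  (no_enter_s : forall a, hd a != s) n :
  forall tl, #|[set a | tl a != s]| <= n -> acyclic tl hd [set: Ar] ->
  condk hd tau s k tl -> exists Vs B, @goodfam W Ar hd tau s k tl Vs B.
Proof.
elim: n => [|n IH] tl hn ac cd.
  apply: base_case => // a; move: hn; rewrite leqn0 cards_eq0 => /eqP /setP /(_ a).
  by rewrite !inE => /negbFE /eqP.
case: (boolP [exists a, tl a != s]) => [/existsP ex | nex]; last first.
  apply: base_case => // a; apply/eqP; apply/negPn.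
  by move: nex => /existsPn /(_ a).
have [u [a0 [us ta0 inu]]] := exists_u ac ex.
have [Vs' [B' gf]] := IH (fun a => if tl a == u then s else tl a)
  (leq_trans (measure' us ta0) hn) (acyc' no_enter_s ac) (cond' u cd).
by move: (step no_enter_s a0 us inu cd) => /(_ _ _ gf). Qed.

Theorem theorem2 (W Ar : finType) (tl hd : Ar -> W) (tau : Ar -> nat) (s : W)
  (k : nat)
  (no_enter_s : forall a : Ar, hd a != s)
  (acyc : acyclic tl hd [set: Ar])
  (cond : forall (i : nat) (v : W), v != s ->
     minn k #|rho hd tau i v| >= minn k #|delta tl tau i v|) :
  exists (Vs : 'I_k -> {set W}) (B : 'I_k -> {set Ar}),
    [/\ (forall j, tau_resp_arborescence tl hd tau s (Vs j) (B j)),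
        (forall j1 j2, j1 != j2 -> [disjoint B j1 & B j2]) &
        (forall v, v != s -> #|[set j | v \in Vs j]| = minn k (indeg hd v))].
Proof.
have [Vs [B [gt dj ct]]] :=
  @aux W Ar hd tau s k no_enter_s #|Ar| tl (max_card _) acyc cond.
exists Vs, B; split => // j.
have [t1 t2 t3 t4] := gt j.
split; first split => //.
  move=> [x [p [pn allp w]]]; apply: acyc; exists x, p; split => //.
  by apply/allP => a _; rewrite /= inE.
move=> v p _ allp /andP [w _].
exact: walk_sorted t4 allp w.
Qed.
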